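(* Let $T=(V,E,\gamma,\mathrm{p})$ and $T'=(V',E',\gamma',\mathrm{p}')$ be partially controllable fault trees, where $V$ and $V'$ need not be disjoint but $E,\gamma,\mathrm{p}$ and the children relation coincide with $E',\gamma',\mathrm{p}'$ and the children relation of $T'$ on $V\cap V'$. Let $v\in\mathrm{CBE}(T)\setminus V'$ and assume $\mathrm{BE}(T)\cap\mathrm{BE}(T')=\varnothing$. Let $T''=T[v\mapsto T']$ be the quasimodular composition. Then $\mathrm{CBE}(T'')=(\mathrm{CBE}(T)\setminus\{v\})\cup\mathrm{CBE}(T')$, and as elements of $\mathcal A(\mathrm{CBE}(T''))$, \[\langle U(T'')\rangle=\langle U(T)\rangle[\mathsf F_v\mapsto\langle U(T')\rangle].\]
   Context: A partially controllable fault tree (PCFT) is a tuple $T=(V,E,\gamma,\mathrm{p})$ where $(V,E)$ is a rooted directed acyclic graph (edges point from a node to its children; root $R_T$), $\gamma\colon V\to\{\mathtt{OR},\mathtt{AND},\mathtt{BE},\mathtt{CBE}\}$ with $\gamma(v)\in\{\mathtt{BE},\mathtt{CBE}\}$ iff $v$ is a leaf, and $\mathrm{p}\colon\mathrm{BE}(T)\to[0,1]$, where $\mathrm{BE}(T)=\{v\mid\gamma(v)=\mathtt{BE}\}$ and $\mathrm{CBE}(T)=\{v\mid\gamma(v)=\mathtt{CBE}\}$. The structure function $S_T(v,\vec f,\vec c)$ for $\vec f\in\{0,1\}^{\mathrm{BE}(T)}$, $\vec c\in\{0,1\}^{\mathrm{CBE}(T)}$ is $f_v$ if $\gamma(v)=\mathtt{BE}$,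 $c_v$ if $\gamma(v)=\mathtt{CBE}$, the disjunction of $S_T(w,\vec f,\vec c)$ over children $w$ if $\gamma(v)=\mathtt{OR}$, and the conjunction if $\gamma(v)=\mathtt{AND}$. With $\vec F$ a random vector with independent coordinates, $\mathbb P(F_v=1)=\mathrm{p}(v)$, the unreliability is the function $U(T)\colon\{0,1\}^{\mathrm{CBE}(T)}\to[0,1]$, $U(T)(\vec c)=\mathbb P(S_T(R_T,\vec F,\vec c)=1)$. Quasimodular composition $T[v\mapsto T']$: the PCFT obtained from $T$ by replacing the node $v$ by the whole PCFT $T'$, i.e. removing $v$, adding the nodes and edges of $T'$ (shared nodes identified), and redirecting every edge of $T$ that pointed to $v$ to point to $R_{T'}$ instead; labels and probabilities are inherited. Squarefree polynomial algebra: for a finite set $X$, $\mathcal A(X)$ is the real algebra of formal sums $\alpha=\sum_{Y\subseteq X}\alpha_Y\prod_{x\in Y}\mathsf F_x$ with polynomial addition and multiplication subject to $\mathsf F_x^2=\mathsf F_x$, i.e. $(\alpha+\beta)_Y=\alpha_Y+\beta_Y$, $(\alpha\beta)_Y=\sum_{Y'\cup Y''=Y}\alpha_{Y'}\beta_{Y''}$; elements of $\mathcal A(X)$ are regarded as elements of $\mathcal A(X')$ for $X\subseteq X'$. For $x\in X\setminus Y$, $\alpha\in\mathcal A(X)$, $\beta\in\mathcal A(Y)$, the substitution $\alpha[\mathsf F_x\mapsto\beta]\in\mathcal A((X\setminus\{x\})\cup Y)$ is $\beta\cdot\sum_{Z\ni x}\alpha_Z\prod_{x'\in Z\setminus\{x\}}\mathsf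 F_{x'}+\sum_{Z\not\ni x}\alpha_Z\prod_{x'\in Z}\mathsf F_{x'}$. For any function $g\colon\{0,1\}^X\to\mathbb R$ there is a unique $\langle g\rangle\in\mathcal A(X)$ with $g(\vec c)=\langle g\rangle[\forall x\in X\colon\mathsf F_x\mapsto c_x]$ for all $\vec c$; in particular $\langle U(T)\rangle\in\mathcal A(\mathrm{CBE}(T))$. *)

(* Defs.v *)
From Stdlib Require Import ClassicalEpsilon.
From HB Require Import structures.
From mathcomp Require Import all_boot all_order all_algebra.
Set Implicit Arguments. Unset Strict Implicit. Unset Printing Implicit Defensive.
Import Order.TTheory GRing.Theory Num.Theory.
Local Open Scope ring_scope.

Inductive gate := OR | AND | BE | CBE.

Definition is_BE (g : gate) : bool := if g is BE then true else false.
Definition is_CBE (g : gate) : bool := if g is CBE then true else false.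
Definition is_leaf_gate (g : gate) : bool :=
  match g with BE | CBE => true | _ => false end.

(* A PCFT whose nodes are drawn from an ambient finite type N:
   node set V, edge relation E (u -> w : w is a child of u), labelling gam,
   probabilities prob (only meaningful on BE nodes), root. *)
Record pcft (N : finType) (R : realFieldType) := Pcft {
  V : {set N};
  E : rel N;
  gam : N -> gate;
  prob : N -> R;
  root : N
}.

Section PCFT.
Variables (N : finType) (R : realFieldType).
Implicit Types (T : pcft N R).

Definition is_pcft T : Prop :=
  [/\ root T \in V T /\
      (forall u w, E T u w -> (u \in V T) && (w \in V T)),
      (forall u w, E T u w -> ~~ connect (E T) w u),
      (forall u, u \in V T -> connect (E T) (root T) u),
      (forall u, u \in V T -> is_leaf_gate (gam T u) = [forall w, ~~ E T u w])
    & (forall u, u \in V T -> is_BE (gam T u) -> 0 <= prob T u <= 1)].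

Definition BEs T : {set N} := [set u in V T | is_BE (gam T u)].
Definition CBEs T : {set N} := [set u in V T | is_CBE (gam T u)].

(* Structure function, with vectors f in {0,1}^BE and c in {0,1}^CBE
   represented as the sets of nodes set to 1.  Defined by recursion with
   fuel; on a DAG, fuel #|V| suffices to reach all leaves. *)
Fixpoint struct_fuel T (n : nat) (u : N) (f c : {set N}) : bool :=
  if n is n'.+1 then
    match gam T u with
    | BE => u \in f
    | CBE => u \in c
    | OR => [exists w, E T u w && struct_fuel T n' w f c]
    | AND => [forall w, E T u w ==> struct_fuel T n' w f c]
    end
  else false.

Definition S T (u : N) (f c : {set N}) : bool := struct_fuel T #|V T| u f c.

(* Unreliability: U(T)(c) = P(S_T(root, F, c) = 1), F having independent
   coordinates with P(F_x = 1) = prob x, written as the explicit sum over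
   all outcomes f ⊆ BE(T) of the product measure. *)
Definition U T (c : {set N}) : R :=
  \sum_(f : {set N} | f \subset BEs T)
     (\prod_(x in BEs T) (if x \in f then prob T x else 1 - prob T x))
     * (S T (root T) f c)%:R.

Definition compose T (v : N) (T' : pcft N R) : pcft N R :=
  Pcft ((V T :\ v) :|: V T')
    (fun u w => ((u \in V T :\ v) &&
                   (((w \in V T :\ v) && E T u w) ||
                    ((w == root T') && E T u v)))
                || E T' u w)
    (fun u => if u \in V T' then gam T' u else gam T u)
    (fun u => if u \in V T' then prob T' u else prob T u)
    (if root T == v then root T' else root T).

Definition agree T (T' : pcft N R) : Prop :=
  forall u, u \in V T -> u \in V T' ->
    [/\ gam T u = gam T' u, prob T u = prob T' u &
        forall w, E T u w = E T' u w].

End PCFT.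

(* Squarefree polynomial algebra: an element is its coefficient family
   (alpha_Y)_{Y}, indexed by finite sets Y of variables (nodes of N). *)
Section SqFree.
Variables (N : finType) (R : realFieldType).

Local Notation sqpoly := {ffun {set N} -> R}.

Definition inA (X : {set N}) (a : sqpoly) : Prop :=
  forall Y : {set N}, ~~ (Y \subset X) -> a Y = 0.

Definition sqadd (a b : sqpoly) : sqpoly := [ffun Y : {set N} => a Y + b Y].

Definition sqmul (a b : sqpoly) : sqpoly :=
  [ffun Y : {set N} => \sum_(Y1 : {set N}) \sum_(Y2 : {set N} | Y1 :|: Y2 == Y)
                a Y1 * b Y2].

(* alpha[F_x |-> beta]
   = beta * sum_{Z ∋ x} alpha_Z prod_{Z\{x}} F + sum_{Z ∌ x} alpha_Z prod_Z F *)
Definition sqsubst (a : sqpoly) (x : N) (b : sqpoly) : sqpoly :=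
  sqadd (sqmul b [ffun Y : {set N} => if x \in Y then 0 else a (x |: Y)])
        [ffun Y : {set N} => if x \in Y then 0 else a Y].

(* alpha[forall x : F_x |-> c_x], c in {0,1}^X given as the set of 1's *)
Definition sqeval (a : sqpoly) (c : {set N}) : R :=
  \sum_(Y : {set N}) a Y * \prod_(x in Y) (x \in c)%:R.

Definition represents (X : {set N}) (g : {set N} -> R) (a : sqpoly) : Prop :=
  inA X a /\ forall c : {set N}, c \subset X -> g c = sqeval a c.

(* <g> : the (unique) element of A(X) representing g : {0,1}^X -> R. *)
Definition rep (X : {set N}) (g : {set N} -> R) : sqpoly :=
  epsilon (inhabits [ffun _ : {set N} => (0:R)]) (represents X g).

End SqFree.

(* Main.v *)
Require Import Defs.
From mathcomp Require Import all_boot all_order all_algebra.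
From Stdlib Require Import ClassicalEpsilon.
From mathcomp Require Import ring zify.
Set Implicit Arguments. Unset Strict Implicit. Unset Printing Implicit Defensive.
Import Order.TTheory GRing.Theory Num.Theory.
Local Open Scope ring_scope.


Section Graph.
Variable N : finType.
Implicit Types (e : rel N).

Definition dsc e u := #|[set x | connect e u x]|.

Lemma dsc_gt0 e u : (0 < dsc e u)%N.
Proof. by apply/card_gt0P; exists u; rewrite inE connect0. Qed.

Lemma dsc_lt e u w : (forall u w, e u w -> ~~ connect e w u) -> e u w ->
  (dsc e w < dsc e u)%N.
Proof.
move=> acy euw; apply: proper_card; apply/properP; split.
  by apply/subsetP => x; rewrite !inE => /(connect_trans (connect1 euw)).
by exists u; rewrite !inE ?connect0 // acy.
Qed.

Lemma connect_in e (A : {set N}) u x : (forall u w, e u w -> w \in A) ->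
  u \in A -> connect e u x -> x \in A.
Proof.
move=> cl uA /connectP [p]; elim: p u uA => [|y p IH] u uA /=; first by move=> _ ->.
by move=> /andP[euy py] ex; exact: (IH y (cl _ _ euy) py ex).
Qed.

Lemma dsc_le e (A : {set N}) u : (forall u w, e u w -> w \in A) ->
  u \in A -> (dsc e u <= #|A|)%N.
Proof.
move=> cl uA; apply: subset_leq_card; apply/subsetP => x; rewrite inE.
exact: connect_in.
Qed.

Lemma rank_acyclic e (r : N -> nat) : (forall u w, e u w -> (r w < r u)%N) ->
  forall u w, e u w -> ~~ connect e w u.
Proof.
move=> dec u w euw; apply/negP => /connectP [p pth eu].
suff H: forall p x, path e x p -> (r (last x p) <= r x)%N.
  have := H p w pth; rewrite -eu => le.
  by have := leq_trans (dec _ _ euw) le; rewrite ltnn.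
elim=> [|y q IH] x //= /andP[exy py].
exact: leq_trans (IH _ py) (ltnW (dec _ _ exy)).
Qed.

End Graph.

Section SF.
Variables (N : finType) (R : realFieldType).
Implicit Types (T : pcft N R).

Lemma sf_S T n u f c : struct_fuel T n.+1 u f c =
  match gam T u with
    | BE => u \in f
    | CBE => u \in c
    | OR => [exists w, E T u w && struct_fuel T n w f c]
    | AND => [forall w, E T u w ==> struct_fuel T n w f c]
    end.
Proof. by []. Qed.

Lemma sf_stab T : (forall u w, E T u w -> ~~ connect (E T) w u) ->
  forall n u f c, (dsc (E T) u <= n)%N ->
  struct_fuel T n u f c = struct_fuel T n.+1 u f c.
Proof.
move=> acy; elim=> [|n IH] u f c hd.
  by have := leq_trans (dsc_gt0 _ u) hd.
rewrite [LHS]sf_S [RHS]sf_S; case: (gam T u) => //.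
  apply: eq_existsb => w; case euw: (E T u w) => //=; apply: IH.
  by rewrite -ltnS; exact: leq_trans (dsc_lt acy euw) hd.
apply: eq_forallb => w; case euw: (E T u w) => //=; rewrite IH //.
by rewrite -ltnS; exact: leq_trans (dsc_lt acy euw) hd.
Qed.

Lemma sf_stab2 T : (forall u w, E T u w -> ~~ connect (E T) w u) ->
  forall n m u f c, (dsc (E T) u <= n)%N -> (dsc (E T) u <= m)%N ->
  struct_fuel T n u f c = struct_fuel T m u f c.
Proof.
move=> acy.
suff H: forall n k u f c, (dsc (E T) u <= n)%N ->
  struct_fuel T n u f c = struct_fuel T (n + k) u f c.
  move=> n m u f c hn hm; case: (leqP n m) => nm.
    by rewrite (H n (m - n)%N) // subnKC.
  by rewrite (H m (n - m)%N) // subnKC // ltnW.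
move=> n; elim=> [|k IH] u f c hd; first by rewrite addn0.
by rewrite addnS -sf_stab ?IH // (leq_trans hd) ?leq_addr.
Qed.

Lemma sf_agree T1 T2 (W : {set N}) (f1 f2 c1 c2 : {set N}) :
  (forall u, u \in W -> gam T1 u = gam T2 u) ->
  (forall u w, u \in W -> E T1 u w = E T2 u w) ->
  (forall u w, u \in W -> E T2 u w -> w \in W) ->
  (forall x, x \in W -> gam T2 x = BE -> (x \in f1) = (x \in f2)) ->
  (forall x, x \in W -> gam T2 x = CBE -> (x \in c1) = (x \in c2)) ->
  forall n u, u \in W -> struct_fuel T1 n u f1 c1 = struct_fuel T2 n u f2 c2.
Proof.
move=> hg hE hcl hf hc; elim=> [|n IH] u uW //.
rewrite !sf_S hg //; case hu: (gam T2 u); rewrite ?hf ?hc //.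
  apply: eq_existsb => w; rewrite hE //; case euw: (E T2 u w) => //=.
  by apply: IH; exact: hcl euw.
apply: eq_forallb => w; rewrite hE //; case euw: (E T2 u w) => //=.
by rewrite IH //; exact: hcl euw.
Qed.

End SF.


Section SQ.
Variables (N : finType) (R : realFieldType).
Local Notation sqpoly := {ffun {set N} -> R}.
Implicit Types (a b : sqpoly) (c X Y Z : {set N}).

Lemma prod_ind Y c : \prod_(x in Y) (x \in c)%:R = (Y \subset c)%:R :> R.
Proof.
case: (boolP (Y \subset c)) => [/subsetP sub | /subsetPn [x xY xc]].
  by rewrite big1 // => x /sub ->.
by rewrite (bigD1 x) //= (negbTE xc) mul0r.
Qed.

Lemma sqevalE a c : sqeval a c = \sum_Y a Y * (Y \subset c)%:R.
Proof. by apply: eq_bigr => Y _; rewrite prod_ind. Qed.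

Lemma sqeval_restr X a c : inA X a -> sqeval a c = sqeval a (c :&: X).
Proof.
move=> aX; rewrite !sqevalE; apply: eq_bigr => Y _.
case: (boolP (Y \subset X)) => YX; first by rewrite subsetI YX andbT.
by rewrite (aX Y YX) !mul0r.
Qed.

Lemma sqeval_add a b c : sqeval (sqadd a b) c = sqeval a c + sqeval b c.
Proof. by rewrite /sqeval -big_split; apply: eq_bigr => Y _; rewrite ffunE mulrDl. Qed.

Lemma sqeval_sub a b c :
  sqeval [ffun Y : {set N} => a Y - b Y] c = sqeval a c - sqeval b c.
Proof. by rewrite /sqeval -sumrB; apply: eq_bigr => Y _; rewrite ffunE mulrBl. Qed.

Lemma ind_and (p q : bool) : (p && q)%:R = p%:R * q%:R :> R.
Proof. by case: p; case: q; rewrite /= ?mul1r ?mul0r. Qed.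

Lemma sqeval_mul a b c : sqeval (sqmul a b) c = sqeval a c * sqeval b c.
Proof.
rewrite !sqevalE big_distrlr /=.
under eq_bigr => Y _ do rewrite ffunE big_distrl /=.
under eq_bigr => Y _ do under eq_bigr => Y1 _ do rewrite big_distrl /=.
rewrite exchange_big /=; apply: eq_bigr => Y1 _.
rewrite (exchange_big_dep xpredT) //=; apply: eq_bigr => Y2 _.
rewrite (big_pred1 (Y1 :|: Y2)); last by move=> Y; rewrite /= eq_sym.
by rewrite subUset ind_and mulrACA.
Qed.

Definition sq0 (x : N) a : sqpoly := [ffun Y : {set N} => if x \in Y then 0 else a Y].
Definition sq1 (x : N) a : sqpoly := [ffun Y : {set N} => if x \in Y then 0 else a (x |: Y)].

Lemma sqeval_dec x a c :
  sqeval a c = sqeval (sq0 x a) c + (x \in c)%:R * sqeval (sq1 x a) c.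
Proof.
rewrite !sqevalE (bigID (fun Y => x \in Y)) /= addrC; congr (_ + _).
  rewrite [RHS](bigID (fun Y => x \in Y)) /= [X in _ = X + _]big1 ?add0r.
    by apply: eq_bigr => Y /negbTE xY; rewrite ffunE xY.
  by move=> Y xY; rewrite ffunE xY mul0r.
rewrite big_distrr [RHS](bigID (fun Y => x \in Y)) /= [X in _ = X + _]big1 ?add0r; last first.
  by move=> Y xY; rewrite ffunE xY mul0r mulr0.
rewrite (reindex_onto (fun Y => x |: Y) (fun Y => Y :\ x)) /=; last first.
  by move=> Y xY; rewrite setD1K.
apply: eq_big => [Z|Z /andP[_ /eqP eZ]].
  rewrite setU11 /=; case: (boolP (x \in Z)) => xZ.
    apply/negbTE/eqP => h; move: xZ; rewrite -h !inE eqxx //.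
  by rewrite setU1K ?eqxx.
have xZ: x \notin Z by rewrite -eZ !inE eqxx.
rewrite ffunE (negbTE xZ) subUset sub1set ind_and.
by rewrite mulrCA.
Qed.

Lemma sq_unique X a b : inA X a -> inA X b ->
  (forall c, c \subset X -> sqeval a c = sqeval b c) -> a = b.
Proof.
move=> ha hb he; apply/ffunP => Y.
suff H: forall n Y, #|Y| = n -> a Y = b Y by exact: H.
elim/ltn_ind => n IH {}Y hY.
case: (boolP (Y \subset X)) => YX; last by rewrite ha ?hb.
have := he Y YX; rewrite !sqevalE (bigD1 Y) //= [X in _ = X](bigD1 Y) //= subxx.
rewrite !mulr1.
have ->: \sum_(i | i != Y) a i * (i \subset Y)%:R = \sum_(i | i != Y) b i * (i \subset Y)%:R.
  apply: eq_bigr => Z ZY; case: (boolP (Z \subset Y)) => ZY'; last by rewrite !mulr0.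
  rewrite (IH #|Z|) // -hY; apply: proper_card; by rewrite properEneq ZY ZY'.
by move/addIr.
Qed.

Lemma sq_exists X (g : {set N} -> R) : exists a, represents X g a.
Proof.
suff H: forall n X, #|X| = n -> forall g : {set N} -> R, exists a, represents X g a.
  exact: H.
elim=> [|n IH] {}X hX {}g.
  have X0 : X = set0 by apply/eqP; rewrite -cards_eq0 hX.
  exists [ffun Y : {set N} => if Y == set0 then g set0 else 0]; split.
    move=> Y; rewrite ffunE; case: eqP => // ->; by rewrite sub0set.
  move=> c; rewrite X0 subset0 => /eqP ->; rewrite sqevalE (bigD1 set0) //=.
  rewrite ffunE eqxx sub0set mulr1 big1 ?addr0 //.
  by move=> Y /negbTE nY; rewrite ffunE nY mul0r.
have [x xX]: exists x, x \in X by apply/set0Pn; rewrite -card_gt0 hX.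
have hX0 : #|X :\ x| = n by move: hX; rewrite (cardsD1 x) xX add1n => -[].
have [a0 [ha0 ea0]] := IH _ hX0 (fun c => g (c :\ x)).
have [a1 [ha1 ea1]] := IH _ hX0 (fun c => g (x |: c)).
have x0 : forall Y, x \in Y -> ~~ (Y \subset X :\ x).
  by move=> Y xY; apply/negP => /subsetP /(_ x xY); rewrite !inE eqxx.
exists [ffun Y : {set N} => if x \in Y then a1 (Y :\ x) - a0 (Y :\ x) else a0 Y]; split.
  move=> Y YX; rewrite ffunE; case: ifP => xY.
    have H: ~~ (Y :\ x \subset X :\ x).
      apply: contra YX => /subsetP s; apply/subsetP => y yY.
      case: (eqVneq y x) => [->//|yx].
      have: y \in Y :\ x by rewrite !inE yx yY.
      by move/s; rewrite !inE => /andP[].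
    by rewrite (ha1 _ H) (ha0 _ H) subrr.
  apply: ha0; apply: contra YX => h; apply: subset_trans h (subsetDl X [set x]).
move=> c cX; set A := [ffun Y : {set N} => if x \in Y then a1 (Y :\ x) - a0 (Y :\ x) else a0 Y].
rewrite (sqeval_dec x).
have -> : sq0 x A = a0.
  apply/ffunP => Y; rewrite !ffunE; case xY: (x \in Y) => //.
  by rewrite ha0 // x0.
have -> : sq1 x A
   = [ffun Y : {set N} => a1 Y - a0 Y].
  apply/ffunP => Y; rewrite !ffunE setU11; case xY: (x \in Y).
    by rewrite ha0 ?ha1 ?x0 // subrr.
  by rewrite setU1K // xY.
have ec : c :&: (X :\ x) = c :\ x.
  apply/setP => y; rewrite !inE; case yc: (y \in c); rewrite /= ?andbF //.
  by rewrite (subsetP cX y yc) andbT.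
rewrite sqeval_sub (sqeval_restr _ ha0) (sqeval_restr _ ha1) ec.
have ep : c :\ x \subset X :\ x by apply: setSD.
rewrite -ea0 // -ea1 //.
have -> : c :\ x :\ x = c :\ x by apply/setP => y; rewrite !inE andbA andbb.
case: (boolP (x \in c)) => xc.
  by rewrite setD1K // mul1r addrC subrK.
rewrite mul0r addr0; congr g; apply/setP => y; rewrite !inE.
by case: eqVneq => // ->; rewrite (negbTE xc).
Qed.

Lemma rep_spec X (g : {set N} -> R) : represents X g (rep X g).
Proof.
rewrite /rep; apply: epsilon_spec.
have [a ha] := sq_exists X g; by exists a.
Qed.

Lemma rep_eq X (g : {set N} -> R) a : represents X g a -> rep X g = a.
Proof.
move=> [ha ea]; have [hr er] := rep_spec X g.
by apply: (sq_unique hr ha) => c cX; rewrite -er // -ea.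
Qed.

End SQ.


Section Gen.
Variables (N : finType) (R : realFieldType).
Implicit Types (T : pcft N R).

Lemma sum_split (A B : {set N}) (F : {set N} -> R) : A :&: B = set0 ->
  \sum_(f : {set N} | f \subset A :|: B) F f =
  \sum_(f1 : {set N} | f1 \subset A) \sum_(f2 : {set N} | f2 \subset B) F (f1 :|: f2).
Proof.
move=> dAB; rewrite pair_big_dep /=.
rewrite (reindex_onto (fun p : {set N} * {set N} => p.1 :|: p.2)
                      (fun f => (f :&: A, f :&: B))) /=; last first.
  by move=> f fAB; rewrite -setIUr; apply/setIidPl.
apply: eq_bigl => [[f1 f2]] /=; apply/idP/idP.
  by case/andP=> _ /eqP [<- <-]; rewrite !subsetIr.
case/andP=> s1 s2; rewrite setUSS //=; apply/eqP; congr (_, _).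
all: apply/setP => x; rewrite !inE.
all: have h1 : (x \in f1) ==> (x \in A) by apply/implyP => /(subsetP s1).
all: have h2 : (x \in f2) ==> (x \in B) by apply/implyP => /(subsetP s2).
all: have := congr1 (fun S : {set N} => x \in S) dAB; rewrite /= !inE.
all: by move: h1 h2; case: (x \in f1); case: (x \in f2); case: (x \in A); case: (x \in B).
Qed.

Lemma P_split (A B : {set N}) (p p1 p2 : N -> R) (f1 f2 : {set N}) : A :&: B = set0 ->
  f1 \subset A -> f2 \subset B ->
  (forall x, x \in A -> p x = p1 x) -> (forall x, x \in B -> p x = p2 x) ->
  \prod_(x in A :|: B) (if x \in f1 :|: f2 then p x else 1 - p x) =
  (\prod_(x in A) (if x \in f1 then p1 x else 1 - p1 x)) *
  (\prod_(x in B) (if x \in f2 then p2 x else 1 - p2 x)).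
Proof.
move=> dAB s1 s2 h1 h2.
rewrite (eq_bigl [predU A & B]); last by move=> x; rewrite !inE.
rewrite bigU /=; last by rewrite -setI_eq0 dAB.
congr (_ * _); apply: eq_bigr => x xA; rewrite inE.
  rewrite h1 //; have ->: (x \in f2) = false.
    apply/negP => /(subsetP s2) xB.
    by have := congr1 (fun S : {set N} => x \in S) dAB; rewrite /= !inE xA xB.
  by rewrite orbF.
rewrite h2 //; have ->: (x \in f1) = false.
  apply/negP => /(subsetP s1) xA'.
  by have := congr1 (fun S : {set N} => x \in S) dAB; rewrite /= !inE xA xA'.
by [].
Qed.

Lemma sumP (A : {set N}) (p : N -> R) :
  \sum_(f : {set N} | f \subset A) \prod_(x in A) (if x \in f then p x else 1 - p x) = 1.
Proof.
pose F i := if i \in A then p i else 0.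
pose G i := if i \in A then 1 - p i else 1.
have := @bigA_distr R 0 1 *%R +%R N F G.
rewrite big1; last by move=> i _; rewrite /F /G; case: (i \in A) => /=; [rewrite addrCA subrr addr0 | rewrite add0r].
move=> e; rewrite [in RHS]e.
change (\sum_(f : {set N} | f \subset A) \prod_(x in A) (if x \in f then p x else 1 - p x) =
  \sum_(J : {set N}) \prod_i (if i \in J then F i else G i)).
 rewrite [in RHS](bigID (fun J : {set N} => J \subset A)) /= [X in _ = _ + X]big1 ?addr0.
  apply: eq_big => // J JA; rewrite [in RHS](bigID (fun i => i \in A)) /=.
  rewrite [X in _ = _ * X]big1 ?mulr1.
    by apply: eq_bigr => i iA; rewrite /F /G iA.
  move=> i iA; have iJ: i \notin J by apply: contra iA => /(subsetP JA).
  by rewrite (negbTE iJ) /G (negbTE iA).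
move=> J /subsetPn [i iJ iA]; rewrite (bigD1 i) //= iJ /F (negbTE iA) mul0r.
by [].
Qed.

Lemma S_loc T (f1 f2 c1 c2 : {set N}) : Defs.root T \in V T ->
  (forall u w, E T u w -> (u \in V T) && (w \in V T)) ->
  (forall x, x \in BEs T -> (x \in f1) = (x \in f2)) ->
  (forall x, x \in CBEs T -> (x \in c1) = (x \in c2)) ->
  Defs.S T (Defs.root T) f1 c1 = Defs.S T (Defs.root T) f2 c2.
Proof.
move=> rV eV hf hc; apply: (sf_agree (W := V T)) => //.
- by move=> u w _ /eV /andP[].
- move=> x xV gx; apply: hf; by rewrite inE xV gx.
- move=> x xV gx; apply: hc; by rewrite inE xV gx.
Qed.

Lemma U_loc T (c1 c2 : {set N}) : Defs.root T \in V T ->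
  (forall u w, E T u w -> (u \in V T) && (w \in V T)) ->
  (forall x, x \in CBEs T -> (x \in c1) = (x \in c2)) ->
  U T c1 = U T c2.
Proof.
move=> rV eV hc; apply: eq_bigr => f _; congr (_ * _%:R).
by rewrite (@S_loc T f f c1 c2 rV eV (fun _ _ => erefl) hc).
Qed.

End Gen.

Section InA.
Variables (N : finType) (R : realFieldType).
Local Notation sqpoly := {ffun {set N} -> R}.
Implicit Types (a b : sqpoly) (X Y : {set N}).

Lemma inA_sub X1 X2 a : X1 \subset X2 -> inA X1 a -> inA X2 a.
Proof.
move=> s h Y YX; apply: h; apply: contra YX => h'; exact: subset_trans h' s.
Qed.

Lemma inA_add X a b : inA X a -> inA X b -> inA X (sqadd a b).
Proof. by move=> ha hb Y YX; rewrite ffunE ha ?hb ?addr0. Qed.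

Lemma inA_mul X1 X2 a b : inA X1 a -> inA X2 b -> inA (X1 :|: X2) (sqmul a b).
Proof.
move=> ha hb Y YX; rewrite ffunE big1 // => Y1 _; rewrite big1 // => Y2 /eqP e.
case: (boolP (Y1 \subset X1)) => s1; last by rewrite ha ?mul0r.
case: (boolP (Y2 \subset X2)) => s2; last by rewrite hb ?mulr0.
by move: YX; rewrite -e setUSS.
Qed.

Lemma inA_sq0 X a x : inA X a -> inA (X :\ x) (sq0 x a).
Proof.
move=> ha Y YX; rewrite ffunE; case: ifP => // xY; apply: ha.
apply: contra YX => s; apply/subsetP => y yY; rewrite !inE (subsetP s y yY) andbT.
by apply: contraNneq (negbT xY) => <-.
Qed.

Lemma inA_sq1 X a x : inA X a -> inA (X :\ x) (sq1 x a).
Proof.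
move=> ha Y YX; rewrite ffunE; case: ifP => // xY; apply: ha.
apply: contra YX => s; apply/subsetP => y yY; rewrite !inE.
rewrite (subsetP s y) ?andbT; last by rewrite !inE yY orbT.
by apply: contraNneq (negbT xY) => <-.
Qed.

Lemma sqsubstE a x b : sqsubst a x b = sqadd (sqmul b (sq1 x a)) (sq0 x a).
Proof. by []. Qed.

End InA.


Section Main.
Variables (N : finType) (R : realFieldType) (T T' : pcft N R) (v : N).
Hypotheses (hT : is_pcft T) (hT' : is_pcft T') (ag : agree T T')
  (vC : v \in CBEs T) (vV' : v \notin V T') (hBE : BEs T :&: BEs T' = set0).

Local Notation T2 := (compose T v T').
Local Notation rt := (@Defs.root N R).

Lemma rV : rt T \in V T. Proof. by case: hT => [[]]. Qed.
Lemma rV' : rt T' \in V T'. Proof. by case: hT' => [[]]. Qed.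
Lemma eV u w : E T u w -> (u \in V T) && (w \in V T). Proof. by case: hT => [[_ h]] *; exact: h. Qed.
Lemma eV' u w : E T' u w -> (u \in V T') && (w \in V T'). Proof. by case: hT' => [[_ h]] *; exact: h. Qed.
Lemma acy u w : E T u w -> ~~ connect (E T) w u. Proof. by case: hT => _ h *; exact: h. Qed.
Lemma acy' u w : E T' u w -> ~~ connect (E T') w u. Proof. by case: hT' => _ h *; exact: h. Qed.
Lemma vV : v \in V T. Proof. by move: vC; rewrite inE => /andP[]. Qed.
Lemma gv : gam T v = CBE. Proof. by move: vC; rewrite inE => /andP[_]; case: (gam T v). Qed.

Lemma E2V' u w : u \in V T' -> E T2 u w = E T' u w.
Proof.
move=> uV'; rewrite /=; case hu: (u \in V T :\ v) => //=.
have uV : u \in V T by move: hu; rewrite inE => /andP[].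
have [_ _ hE] := ag uV uV'.
have ->: E T u v = false.
  by rewrite hE; apply/negP => /eV'/andP[_]; rewrite (negbTE vV').
rewrite hE andbF orbF; by case: (E T' u w); rewrite ?andbF ?orbT.
Qed.

Lemma E2cl u w : E T2 u w -> w \in V T2.
Proof.
move=> /= /orP[/andP[_ /orP[/andP[hw _]|/andP[/eqP -> _]]]|/eV'/andP[_ h]].
- by rewrite inE hw.
- by rewrite inE rV' orbT.
- by rewrite inE h orbT.
Qed.

Lemma E2nV' u w : u \notin V T' -> E T2 u w =
  ((u \in V T :\ v) && (((w \in V T :\ v) && E T u w) || ((w == rt T') && E T u v))).
Proof.
move=> uV'; rewrite /=; have ->: E T' u w = false.
  by apply/negP => /eV'/andP[]; rewrite (negbTE uV').
by rewrite orbF.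
Qed.

Lemma dscN (e : rel N) u : (dsc e u <= #|N|)%N. Proof. exact: max_card. Qed.

Definition rk u := if u \in V T' then dsc (E T') u else (dsc (E T) u + #|N|)%N.

Lemma rk_dec u w : E T2 u w -> (rk w < rk u)%N.
Proof.
rewrite /rk; case uV': (u \in V T').
  rewrite E2V' // => euw; have /andP[_ ->] := eV' euw; exact: dsc_lt acy' euw.
rewrite E2nV' ?uV' // => /andP[_ /orP[/andP[_ euw]|/andP[/eqP -> _]]].
  case: (w \in V T').
    by have := dscN (E T') w; have := dsc_gt0 (E T) u; lia.
  by rewrite ltn_add2r; exact: dsc_lt acy euw.
by rewrite rV'; have := dscN (E T') (rt T'); have := dsc_gt0 (E T) u; lia.
Qed.

Lemma acy2 u w : E T2 u w -> ~~ connect (E T2) w u.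
Proof. exact: (@rank_acyclic N (E T2) rk rk_dec u w). Qed.

Lemma sfA n u (f c : {set N}) : u \in V T' -> struct_fuel T2 n u f c = struct_fuel T' n u f c.
Proof.
move=> uV'; apply: (sf_agree (W := V T')) => //.
- by move=> x xV'; rewrite /= xV'.
- by move=> x y xV'; rewrite E2V'.
- by move=> x y _ /eV'/andP[].
Qed.

Lemma sfA' n u f (c1 c2 : {set N}) : u \in V T -> u \in V T' ->
  (forall x, x \in V T' -> (x \in c1) = (x \in c2)) ->
  struct_fuel T n u f c1 = struct_fuel T' n u f c2.
Proof.
move=> uV uV' hc; apply: (sf_agree (W := V T :&: V T')); rewrite ?inE ?uV ?uV' //.
- by move=> x; rewrite inE => /andP[xV xV']; have [] := ag xV xV'.
- by move=> x y; rewrite inE => /andP[xV xV']; have [_ _ ->] := ag xV xV'.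
- move=> x y; rewrite inE => /andP[xV xV'] exy; have := exy; have [_ _ <-] := ag xV xV'.
  by rewrite inE; move/eV => /andP[_ ->]; move/eV': exy => /andP[_ ->].
- by move=> x; rewrite inE => /andP[_ xV'] _; apply: hc.
Qed.

Definition cp f c : {set N} := if Defs.S T' (rt T') f c then v |: c else c :\ v.

Lemma sfB n : forall u f c, u \in V T -> u != v -> (dsc (E T) u <= n)%N ->
  struct_fuel T2 (n + #|V T'|) u f c = struct_fuel T n u f (cp f c).
Proof.
elim: n => [|n IH] u f c uV uv hd; first by have := leq_trans (dsc_gt0 _ u) hd.
case uV': (u \in V T').
  rewrite sfA // -(@sfA' _ _ _ (cp f c)) //; last first.
    move=> x xV'; have xv: x != v by apply: contraNneq vV' => <-.
    by rewrite /cp; case: ifP; rewrite !inE (negbTE xv).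
  apply: (@sf_stab2 _ _ T acy _ _ u f (cp f c) _ hd); by rewrite (leq_trans hd) ?leq_addr.
have uV2 : u \in V T :\ v by apply/setD1P; split.
have hE w : E T2 u w = ((w \in V T :\ v) && E T u w) || ((w == rt T') && E T u v).
  by rewrite E2nV' ?uV' // uV2.
have hc w : E T u w -> w != v ->
    struct_fuel T2 (n + #|V T'|) w f c = struct_fuel T n w f (cp f c).
  move=> euw wv; apply: IH => //; first by have /andP[] := eV euw.
  by rewrite -ltnS; exact: leq_trans (dsc_lt acy euw) hd.
have hv : E T u v ->
    struct_fuel T2 (n + #|V T'|) (rt T') f c = struct_fuel T n v f (cp f c).
  move=> euv; have hn : (0 < n)%N.
    by have := leq_trans (dsc_gt0 _ v) (leq_trans (dsc_lt acy euv) hd).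
  rewrite -(prednK hn) sf_S gv sfA ?rV' //.
  have hK : (dsc (E T') (rt T') <= #|V T'|)%N.
    by apply: dsc_le; [move=> x y /eV'/andP[] | exact: rV'].
  rewrite (@sf_stab2 _ _ T' acy' _ #|V T'| (rt T') f c) //; last first.
    by rewrite (leq_trans hK) ?leq_addl.
  by rewrite /cp; case: ifP; rewrite !inE eqxx.
rewrite addSn !sf_S.
have -> : gam T2 u = gam T u by rewrite /= uV'.
case hg: (gam T u) => //.
- apply/existsP/existsP => [[w /andP[ew gw]] | [w /andP[ew hw]]].
    move: ew; rewrite hE => /orP[/andP[wV ew] | /andP[/eqP wr ev]].
      have [wv _] := setD1P wV.
      by exists w; rewrite ew /= -hc.
    by exists v; rewrite ev /= -hv // -wr.
  case: (eqVneq w v) => [wv | wv].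
    have ev : E T u v by rewrite -wv.
    by exists (rt T'); rewrite hE eqxx ev orbT /= hv // -wv.
  have wV : w \in V T :\ v by apply/setD1P; split; [exact: wv | by have /andP[] := eV ew].
  by exists w; rewrite hE ew wV /= hc.
- apply/forallP/forallP => H w; apply/implyP => ew.
    case: (eqVneq w v) => [wv | wv].
      have ev : E T u v by rewrite -wv.
      rewrite wv -hv //; apply: (implyP (H (rt T'))).
      by rewrite hE eqxx ev orbT.
    have wV : w \in V T :\ v by apply/setD1P; split; [exact: wv | by have /andP[] := eV ew].
    by rewrite -hc //; apply: (implyP (H w)); rewrite hE ew wV.
  move: ew; rewrite hE => /orP[/andP[wV ew]|/andP[/eqP -> ev]].
    have [wv _] := setD1P wV.
    by rewrite hc //; exact: (implyP (H w)) ew.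
  by rewrite hv //; exact: (implyP (H v)) ev.
- by rewrite /cp; case: ifP; rewrite !inE (negbTE uv).
Qed.

Lemma hK' : (dsc (E T') (rt T') <= #|V T'|)%N.
Proof. by apply: dsc_le; [move=> x y /eV'/andP[] | exact: rV']. Qed.

Lemma semS f c : Defs.S T2 (rt T2) f c = Defs.S T (rt T) f (cp f c).
Proof.
rewrite /Defs.S /=; case: eqVneq => [rv | rv].
  rewrite sfA ?rV' //.
  rewrite (@sf_stab2 _ _ T' acy' _ #|V T'| (rt T') f c) ?hK' //; last first.
    by rewrite (leq_trans hK') // subset_leq_card // subsetUr.
  have hn : (0 < #|V T|)%N by apply/card_gt0P; exists v; exact: vV.
  rewrite rv -(prednK hn) sf_S gv /cp /Defs.S.
  by case: (struct_fuel T' #|V T'| (rt T') f c); rewrite !inE eqxx.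
have rVT : rt T \in V T := rV.
rewrite -(@sfB #|V T|) //; last by apply: dsc_le rVT => x y /eV/andP[].
have r2 : rt T \in V T2 by rewrite /= !inE rv rVT.
have h2 : (dsc (E T2) (rt T) <= #|V T2|)%N by apply: dsc_le r2 => x y /E2cl.
apply: (@sf_stab2 _ _ T2 acy2) => //.
apply: (leq_trans h2); rewrite /=.
have := cardsUI (V T :\ v) (V T'); have : (#|V T :\ v| <= #|V T|)%N.
  by apply: subset_leq_card; apply: subsetDl.
lia.
Qed.

Lemma beNV' x : x \in BEs T -> x \notin V T'.
Proof.
move=> xB; apply/negP => xV'.
have xV : x \in V T by move: xB; rewrite inE => /andP[].
have [g _ _] := ag xV xV'.
have : x \in BEs T :&: BEs T' by rewrite inE xB inE xV' -g; move: xB; rewrite inE => /andP[].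
by rewrite hBE inE.
Qed.

Lemma BE2 : BEs T2 = BEs T :|: BEs T'.
Proof.
apply/setP => x; rewrite !inE /=; case xV': (x \in V T'); rewrite ?orbT ?orbF /=.
  case xV: (x \in V T) => //=; have [-> _ _] := ag xV xV'; by rewrite orbb.
case: (eqVneq x v) => [-> | xv]; first by rewrite /= gv andbF.
by [].
Qed.

Lemma CBE2 : CBEs T2 = (CBEs T :\ v) :|: CBEs T'.
Proof.
apply/setP => x; rewrite !inE /=; case xV': (x \in V T'); rewrite ?orbT ?orbF /=.
  have xv : x != v by apply: contraNneq vV' => <-.
  rewrite xv /=; case xV: (x \in V T) => //=; have [-> _ _] := ag xV xV'; by rewrite orbb.
by rewrite andbA.
Qed.

Lemma prob2T x : x \in BEs T -> prob T2 x = prob T x.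
Proof. by move=> xB; rewrite /= (negbTE (beNV' xB)). Qed.

Lemma prob2T' x : x \in BEs T' -> prob T2 x = prob T' x.
Proof. by move=> xB; move: xB; rewrite inE => /andP[xV _]; rewrite /= xV. Qed.

Definition pr (T0 : pcft N R) (f : {set N}) :=
  \prod_(x in BEs T0) (if x \in f then prob T0 x else 1 - prob T0 x).

Lemma U2 c : U T2 c = U T' c * U T (v |: c) + (1 - U T' c) * U T (c :\ v).
Proof.
have key : U T2 c = \sum_(f2 : {set N} | f2 \subset BEs T') pr T' f2 * U T (cp f2 c).
  rewrite /U BE2 sum_split //.
  transitivity (\sum_(f1 : {set N} | f1 \subset BEs T) \sum_(f2 : {set N} | f2 \subset BEs T')
     (pr T f1 * pr T' f2) * (Defs.S T (rt T) f1 (cp f2 c))%:R).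
    apply: eq_bigr => f1 s1; apply: eq_bigr => f2 s2.
    rewrite semS (@P_split _ _ _ _ _ (prob T) (prob T')) //; last first.
    - exact: prob2T'.
    - exact: prob2T.
    have d1 : forall x, x \in f1 -> x \notin BEs T'.
      move=> x /(subsetP s1) xB; apply/negP => xB'.
      have : x \in BEs T :&: BEs T' by rewrite inE xB xB'.
      by rewrite hBE inE.
    have d2 : forall x, x \in f2 -> x \notin BEs T.
      move=> x /(subsetP s2) xB; apply/negP => xB'.
      have : x \in BEs T :&: BEs T' by rewrite inE xB xB'.
      by rewrite hBE inE.
    have -> : cp (f1 :|: f2) c = cp f2 c.
      rewrite /cp (@S_loc _ _ T' (f1 :|: f2) f2 c c) ?rV' //.
      - by move=> x y /eV'.
      - move=> x xB; rewrite inE; case: (boolP (x \in f1)) => //= xf1.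
        by have := d1 x xf1; rewrite xB.
    rewrite (@S_loc _ _ T (f1 :|: f2) f1 (cp f2 c) (cp f2 c)) ?rV //.
    - by move=> x y /eV.
    - move=> x xB; rewrite inE; case: (boolP (x \in f2)) => xf2; last by rewrite orbF.
      by have := d2 x xf2; rewrite xB.
  rewrite exchange_big /=; apply: eq_bigr => f2 _.
  rewrite /U big_distrr /=; apply: eq_bigr => f1 _.
  by rewrite /pr [RHS]mulrCA mulrA.
have e2 : forall f2, U T (cp f2 c) = U T (c :\ v) +
    (Defs.S T' (rt T') f2 c)%:R * (U T (v |: c) - U T (c :\ v)).
  move=> f2; rewrite /cp; case: (Defs.S T' (rt T') f2 c).
    by rewrite mul1r addrC subrK.
  by rewrite mul0r addr0.
have hU' : U T' c = \sum_(f2 : {set N} | f2 \subset BEs T') pr T' f2 * (Defs.S T' (rt T') f2 c)%:R by [].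
rewrite key (eq_bigr (fun f2 => pr T' f2 * U T (c :\ v) +
  (pr T' f2 * (Defs.S T' (rt T') f2 c)%:R) * (U T (v |: c) - U T (c :\ v)))); last first.
  by move=> f2 _; rewrite e2 mulrDr mulrA.
rewrite big_split /= -!big_distrl /= -hU'.
have -> : \sum_(f2 : {set N} | f2 \subset BEs T') pr T' f2 = 1 by apply: sumP.
ring.
Qed.

End Main.


Theorem theorem26 (N : finType) (R : realFieldType) (T T' : pcft N R) (v : N) :
  is_pcft T -> is_pcft T' -> agree T T' ->
  v \in CBEs T -> v \notin V T' ->
  BEs T :&: BEs T' = set0 ->
  CBEs (compose T v T') = (CBEs T :\ v) :|: CBEs T' /\
  rep (CBEs (compose T v T')) (U (compose T v T'))
    = sqsubst (rep (CBEs T) (U T)) v (rep (CBEs T') (U T')).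
Proof.
move=> hT hT' ag vC vV' hBE.
have C2 : CBEs (compose T v T') = (CBEs T :\ v) :|: CBEs T' by apply: CBE2.
split => //.
rewrite C2.
set X := CBEs T; set X' := CBEs T'.
set a := rep X (U T); set b := rep X' (U T').
have [ha ea] := rep_spec X (U T).
have [hb eb] := rep_spec X' (U T').
have vX : v \in X := vC.
apply: rep_eq; split.
  rewrite sqsubstE; apply: inA_add.
    apply: (@inA_sub _ _ (X' :|: (X :\ v))); first by rewrite setUC.
    exact: (inA_mul hb (inA_sq1 (x:=v) ha)).
  apply: (@inA_sub _ _ (X :\ v)); first exact: subsetUl.
  exact: (inA_sq0 (x:=v) ha).
move=> c cX.
have rT : Defs.root T \in V T by case: hT => [[]].
have rT' : Defs.root T' \in V T' by case: hT' => [[]].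
have eT : forall u w, E T u w -> (u \in V T) && (w \in V T) by case: hT => [[_ h]] *; exact: h.
have eT' : forall u w, E T' u w -> (u \in V T') && (w \in V T') by case: hT' => [[_ h]] *; exact: h.
rewrite U2 // sqsubstE sqeval_add sqeval_mul.
have hU' : U T' c = sqeval b c.
  rewrite (@U_loc _ _ T' c (c :&: X')) //; last by move=> x xX; rewrite inE xX andbT.
  by rewrite eb ?subsetIr // -sqeval_restr.
have r0 : forall c0, c0 :&: (X :\ v) = c :&: (X :\ v) ->
    sqeval (sq0 v a) c0 = sqeval (sq0 v a) c.
  move=> c0 e; rewrite (sqeval_restr _ (inA_sq0 (x:=v) ha)) e.
  by rewrite [RHS](sqeval_restr _ (inA_sq0 (x:=v) ha)).
have r1 : forall c0, c0 :&: (X :\ v) = c :&: (X :\ v) ->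
    sqeval (sq1 v a) c0 = sqeval (sq1 v a) c.
  move=> c0 e; rewrite (sqeval_restr _ (inA_sq1 (x:=v) ha)) e.
  by rewrite [RHS](sqeval_restr _ (inA_sq1 (x:=v) ha)).
have hU1 : U T (v |: c) = sqeval (sq0 v a) c + sqeval (sq1 v a) c.
  rewrite (@U_loc _ _ T (v |: c) (v |: (c :&: X))) //; last first.
    by move=> x xX; rewrite !in_setU1 in_setI xX andbT.
  rewrite ea; last by rewrite subUset sub1set vX subsetIr.
  rewrite (sqeval_dec v) setU11 mul1r r0 ?r1 //;
    by apply/setP => x; rewrite !(in_setI, in_setU1, in_setD1); case: (x == v); case: (x \in c); case: (x \in X).
have hU0 : U T (c :\ v) = sqeval (sq0 v a) c.
  rewrite (@U_loc _ _ T (c :\ v) ((c :&: X) :\ v)) //; last first.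
    by move=> x xX; rewrite !(in_setI, in_setD1) xX andbT.
  rewrite ea; last by apply/subsetP => x; rewrite !inE => /andP[_ /andP[]].
  rewrite (sqeval_dec v) !inE eqxx /= mul0r addr0 r0 //.
  by apply/setP => x; rewrite !(in_setI, in_setU1, in_setD1); case: (x == v); case: (x \in c); case: (x \in X).
rewrite hU' hU1 hU0; ring.
Qed.
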